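(* Let $M$ and $M'$ be frame models such that $M'$ is a mutation of $M$ that is stable on a set $X\subseteq U_{\sigma_{\mathsf f}}$ of foreground elements, and let $\nu$ be a variable assignment. Then for every frame-logic formula $\alpha$ with $[\![\mathit{Sp}(\alpha)]\!]_M(\nu)\subseteq X$ we have $M,\nu\models\alpha$ iff $M',\nu\models\alpha$; and for every frame-logic term $t$ with $[\![\mathit{Sp}(t)]\!]_M(\nu)\subseteq X$ we have $[\![t]\!]_{M,\nu}=[\![t]\!]_{M',\nu}$.
   Context: Frame logic (FL). Fix a multi-sorted signature with a finite set $S$ of sorts containing a designated foreground sort $\sigma_{\mathsf f}$ and a background sort $\sigma_{\mathsf{S(f)}}$, a set $C$ of constants, a set $F$ of function symbols (each of a type $\tau_1\times\cdots\times\tau_m\to\tau$), and two disjoint sets of relation symbols: ordinary relations $\mathcal R$ and inductively defined relations $\mathcal I$. The universe of $\sigma_{\mathsf{S(f)}}$ is the powerset of the universe $U_{\sigma_{\mathsf f}}$ of $\sigma_{\mathsf f}$; the only symbols involving $\sigma_{\mathsf{S(f)}}$ are $\in$ (of type $\sigma_{\mathsf f}\times\sigma_{\mathsf{S(f)}}$), $\cup$, $\cap$, complement and $\emptyset$, with their standard meanings. Other background sorts may be constrained by background theories. A subset $F_{\mathsf m}\subseteq F$ of function symbols is declared mutable; each $f\in F_{\mathsf m}$ has at least one argument of sort $\sigma_{\mathsf f}$. Syntax. Guards: $\gamma ::= t=t \mid R(t_1,\dots,t_m)\ (R\in\mathcal R) \mid \gamma\wedge\gamma\mid\neg\gamma\mid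 \mathit{ite}(\gamma:\gamma,\gamma)\mid \exists y:\gamma.\,\gamma$, where guards contain no terms of sort $\sigma_{\mathsf{S(f)}}$. Formulas: $\varphi ::= t=t\mid R(t_1,\dots,t_m)\ (R\in\mathcal R\cup\mathcal I)\mid \varphi\wedge\varphi\mid\neg\varphi\mid\mathit{ite}(\gamma:\varphi,\varphi)\mid\exists y:\gamma.\,\varphi$. Terms: $t::= c\mid x\mid f(t_1,\dots,t_m)\mid \mathit{ite}(\gamma:t,t)\mid \mathit{Sp}(\varphi)\mid\mathit{Sp}(t)$, the last two (''support expressions'') being of sort $\sigma_{\mathsf{S(f)}}$. Each $R\in\mathcal I$ has a definition $R(\bar x):=\rho_R(\bar x)$, where no argument of $R$ has sort $\sigma_{\mathsf{S(f)}}$ and every occurrence of a relation of $\mathcal I$ in the FL formula $\rho_R$ is under an even number of negations or inside a support expression. Models. A model $M$ gives a universe per sort, interprets constants, functions and relations of $\mathcal R\cup\mathcal I$ (respecting background theories), and maps each support expression $\mathit{Sp}(\varphi)$, $\mathit{Sp}(t)$ to a function from variable assignments to sets of foreground elements. Evaluation is standard; $\mathit{ite}(\gamma:\alpha,\beta)$ holds iff $(\gamma\wedge\alpha)\vee(\neg\gamma\wedge\beta)$; $\exists y:\gamma.\varphi$ holds iff $\exists y.(\gamma\wedge\varphi)$; support expressions are evaluated by the interpretation. Support equations (for all $\nu$, writing $[\![\cdot]\!]$ for $[\![\cdot]\!]_M$): $\mathit{Sp}(c)=\mathit{Sp}(x)=\emptyset$; $[\![\mathit{Sp}(f(t_1..t_n))]\!](\nu)=\bigcup_{i:\,t_i\text{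 of sort }\sigma_{\mathsf f}}\{[\![t_i]\!]_{M,\nu}\}\cup\bigcup_i[\![\mathit{Sp}(t_i)]\!](\nu)$ if $f\in F_{\mathsf m}$, and $\bigcup_i[\![\mathit{Sp}(t_i)]\!](\nu)$ otherwise; $\mathit{Sp}(\mathit{Sp}(\varphi))=\mathit{Sp}(\varphi)$, $\mathit{Sp}(\mathit{Sp}(t))=\mathit{Sp}(t)$; $\mathit{Sp}(t_1=t_2)=\mathit{Sp}(t_1)\cup\mathit{Sp}(t_2)$; $\mathit{Sp}(R(\bar t))=\bigcup_i\mathit{Sp}(t_i)$ for $R\in\mathcal R$; for $R\in\mathcal I$, $[\![\mathit{Sp}(R(\bar t))]\!](\nu)=[\![\mathit{Sp}(\rho_R(\bar x))]\!](\nu[\bar x\leftarrow[\![\bar t]\!]_{M,\nu}])\cup\bigcup_i[\![\mathit{Sp}(t_i)]\!](\nu)$; $\mathit{Sp}(\alpha\wedge\beta)=\mathit{Sp}(\alpha)\cup\mathit{Sp}(\beta)$; $\mathit{Sp}(\neg\varphi)=\mathit{Sp}(\varphi)$; $[\![\mathit{Sp}(\mathit{ite}(\gamma:\alpha,\beta))]\!](\nu)=[\![\mathit{Sp}(\gamma)]\!](\nu)\cup[\![\mathit{Sp}(\alpha)]\!](\nu)$ if $M,\nu\models\gamma$ and $[\![\mathit{Sp}(\gamma)]\!](\nu)\cup[\![\mathit{Sp}(\beta)]\!](\nu)$ otherwise (likewise for term-level $\mathit{ite}$); $[\![\mathit{Sp}(\exists y:\gamma.\varphi)]\!](\nu)=\bigcup_{u}[\![\mathit{Sp}(\gamma)]\!](\nu[y\leftarrow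 u])\cup\bigcup_{u:\,M,\nu[y\leftarrow u]\models\gamma}[\![\mathit{Sp}(\varphi)]\!](\nu[y\leftarrow u])$, $u$ ranging over the domain of $y$. Inductive equations: $[\![R(\bar x)]\!]=[\![\rho_R(\bar x)]\!]$ for $R\in\mathcal I$. Frame models. Two models have the same pre-model if they agree on the universes and on all constants, functions and relations of $\mathcal R$. A model $M$ is a frame model if it satisfies the support equations and the inductive equations, and (1) no model $M''$ with the same pre-model whose support-expression interpretations are pointwise contained in those of $M$, with strict containment for at least one support expression and assignment, satisfies the support equations; and (2) no model $M''$ with the same pre-model and the same support-expression interpretations, whose inductive relations are contained in those of $M$ with at least one strictly smaller, satisfies the inductive equations. Mutations. For models $M,M'$ over the same universe, $M'$ is a mutation of $M$ if they agree on all constants, all relations in $\mathcal R$ and all functions in $F\setminus F_{\mathsf m}$. The mutation is stable on $X\subseteq U_{\sigma_{\mathsf f}}$ if $[\![f]\!]_M(u_1,\dots,u_n)=[\![f]\!]_{M'}(u_1,\dots,u_n)$ for all $f\in F_{\mathsf m}$ and all argument tuples with $\{u_1,\dots,u_n\}\cap X\neq\emptyset$. *)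

(* Defs.v *)
From Stdlib Require Import List Fin ClassicalEpsilon PeanoNat.

(* Sorts: the foreground sort sigma_f (SF), the background sort
   sigma_{S(f)} = powerset of the foreground universe (SSF), and the other
   sorts of the signature (SB b). *)
Inductive sort (B : Type) : Type := SF | SSF | SB (b : B).
Arguments SF {B}. Arguments SSF {B}. Arguments SB {B} b.

(* Sorts available to user symbols (constants, functions, relations):
   None = sigma_f, Some b = SB b.  No user symbol involves sigma_{S(f)}. *)
Definition emb {B : Type} (o : option B) : sort B :=
  match o with None => SF | Some b => SB b end.

Record signature := {
  bsort : Type;
  bsort_eqdec : forall a b : bsort, {a = b} + {a <> b};
  bsort_finite : exists l : list bsort, forall b, In b l;
  const : Type;
  csort : const -> option bsort;
  func : Type;
  farity : func -> nat;
  farg : forall f, Fin.t (farity f) -> option bsort;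
  fres : func -> option bsort;
  fmut : func -> bool;
  fmut_fg : forall f, fmut f = true -> exists i, farg f i = None;
  rel : Type;
  rarity : rel -> nat;
  rarg : forall r, Fin.t (rarity r) -> option bsort;
  irel : Type;
  iarity : irel -> nat;
  iarg : forall r, Fin.t (iarity r) -> option bsort
}.

Section FL.
Context {S : signature}.
Local Notation B := (bsort S).
Definition srt := sort B.

Definition sort_eqdec (s1 s2 : srt) : {s1 = s2} + {s1 <> s2}.
Proof. decide equality. apply bsort_eqdec. Defined.

Inductive var := Var (n : nat) (s : srt).
Definition vsort (x : var) : srt := match x with Var _ s => s end.

Definition var_eqdec (x y : var) : {x = y} + {x <> y}.
Proof. decide equality; first [apply sort_eqdec | apply Nat.eq_dec]. Defined.

(* Intrinsically sorted terms; guards are formulas satisfying [guard]. *)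
Inductive term : srt -> Type :=
| TConst (c : const S) : term (emb (csort S c))
| TVar (x : var) : term (vsort x)
| TApp (f : func S) (args : forall i : Fin.t (farity S f), term (emb (farg S f i)))
    : term (emb (fres S f))
| TIte (s : srt) (g : formula) (t1 t2 : term s) : term s
| TSpF (phi : formula) : term SSF
| TSpT (s : srt) (t : term s) : term SSF
| TUnion (a b : term SSF) : term SSF
| TInter (a b : term SSF) : term SSF
| TCompl (a : term SSF) : term SSF
| TEmpty : term SSF
with formula : Type :=
| FEq (s : srt) (t1 t2 : term s)
| FRel (r : rel S) (args : forall i : Fin.t (rarity S r), term (emb (rarg S r i)))
| FIRel (r : irel S) (args : forall i : Fin.t (iarity S r), term (emb (iarg S r i)))
| FMem (a : term SF) (b : term SSF)
| FAnd (a b : formula)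
| FNot (a : formula)
| FIte (g a b : formula)
| FEx (y : var) (g a : formula).

Inductive sexpr := SEF (phi : formula) | SET (s : srt) (t : term s).

Fixpoint gterm {s} (t : term s) : Prop :=
  match t with
  | TConst _ => True
  | TVar x => vsort x <> SSF
  | TApp _ args => forall i, gterm (args i)
  | TIte _ g a b => guard g /\ gterm a /\ gterm b
  | _ => False
  end
with guard (phi : formula) : Prop :=
  match phi with
  | FEq _ a b => gterm a /\ gterm b
  | FRel _ args => forall i, gterm (args i)
  | FIRel _ _ => False
  | FMem _ _ => False
  | FAnd a b => guard a /\ guard b
  | FNot a => guard a
  | FIte g a b => guard g /\ guard a /\ guard b
  | FEx _ g a => guard g /\ guard a
  end.

Fixpoint wft {s} (t : term s) : Prop :=
  match t with
  | TConst _ => True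
  | TVar _ => True
  | TApp _ args => forall i, wft (args i)
  | TIte _ g a b => guard g /\ wft a /\ wft b
  | TSpF phi => wff phi
  | TSpT _ t => wft t
  | TUnion a b => wft a /\ wft b
  | TInter a b => wft a /\ wft b
  | TCompl a => wft a
  | TEmpty => True
  end
with wff (phi : formula) : Prop :=
  match phi with
  | FEq _ a b => wft a /\ wft b
  | FRel _ args => forall i, wft (args i)
  | FIRel _ args => forall i, wft (args i)
  | FMem a b => wft a /\ wft b
  | FAnd a b => wff a /\ wff b
  | FNot a => wff a
  | FIte g a b => guard g /\ wff a /\ wff b
  | FEx _ g a => guard g /\ wff a
  end.

Definition wfe (e : sexpr) : Prop :=
  match e with SEF phi => wff phi | SET _ t => wft t end.

Fixpoint freet (x : var) {s} (t : term s) : Prop :=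
  match t with
  | TConst _ => False
  | TVar y => x = y
  | TApp _ args => exists i, freet x (args i)
  | TIte _ g a b => freef x g \/ freet x a \/ freet x b
  | TSpF phi => freef x phi
  | TSpT _ t => freet x t
  | TUnion a b => freet x a \/ freet x b
  | TInter a b => freet x a \/ freet x b
  | TCompl a => freet x a
  | TEmpty => False
  end
with freef (x : var) (phi : formula) : Prop :=
  match phi with
  | FEq _ a b => freet x a \/ freet x b
  | FRel _ args => exists i, freet x (args i)
  | FIRel _ args => exists i, freet x (args i)
  | FMem a b => freet x a \/ freet x b
  | FAnd a b => freef x a \/ freef x b
  | FNot a => freef x a
  | FIte g a b => freef x g \/ freef x a \/ freef x b
  | FEx y g a => x <> y /\ (freef x g \/ freef x a)
  end.

(* Positivity: with polarity p (true = under an even number of negations),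
   every occurrence of an inductive relation outside support expressions
   is positive.  Occurrences inside terms are necessarily inside support
   expressions (guards contain no inductive relations), so terms impose no
   constraint. *)
Fixpoint ipos (p : bool) (phi : formula) : Prop :=
  match phi with
  | FIRel _ _ => p = true
  | FAnd a b => ipos p a /\ ipos p b
  | FNot a => ipos (negb p) a
  | FIte _ a b => ipos p a /\ ipos p b
  | FEx _ _ a => ipos p a
  | _ => True
  end.

(* Definitions R(x_1..x_m) := rho_R: parameter x_i is the variable
   Var (iparam r i) (sort of the i-th argument of r). *)
Record idefs := {
  iparam : forall r : irel S, Fin.t (iarity S r) -> nat;
  irho : irel S -> formula
}.
Definition pvar (D : idefs) (r : irel S) (i : Fin.t (iarity S r)) : var :=
  Var (iparam D r i) (emb (iarg S r i)).

Definition idefs_wf (D : idefs) : Prop :=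
  forall r : irel S,
    (forall i j, pvar D r i = pvar D r j -> i = j) /\
    wff (irho D r) /\
    ipos true (irho D r) /\
    (forall x, freef x (irho D r) -> exists i, x = pvar D r i).

Definition U (UF : Type) (UB : B -> Type) (s : srt) : Type :=
  match s with SF => UF | SSF => UF -> Prop | SB b => UB b end.

Record premodel (UF : Type) (UB : B -> Type) := {
  cI : forall c : const S, U UF UB (emb (csort S c));
  fI : forall f : func S,
        (forall i, U UF UB (emb (farg S f i))) -> U UF UB (emb (fres S f));
  rI : forall r : rel S, (forall i, U UF UB (emb (rarg S r i))) -> Prop
}.

Definition assignment (UF : Type) (UB : B -> Type) : Type :=
  forall x : var, U UF UB (vsort x).

Record model (UF : Type) (UB : B -> Type) := {
  pre : premodel UF UB;
  iI : forall r : irel S, (forall i, U UF UB (emb (iarg S r i))) -> Prop;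
  spI : sexpr -> assignment UF UB -> UF -> Prop
}.

Section Eval.
Context {UF : Type} {UB : B -> Type}.
Local Notation U := (U UF UB).
Local Notation assignment := (assignment UF UB).

Definition upd (nu : assignment) (y : var) (u : U (vsort y)) : assignment :=
  fun x => match var_eqdec y x with
           | left e => eq_rect y (fun z => U (vsort z)) u x e
           | right _ => nu x
           end.

Variable M : model UF UB.

Fixpoint eval (nu : assignment) {s} (t : term s) {struct t} : U s :=
  match t in term s return U s with
  | TConst c => cI _ _ (pre _ _ M) c
  | TVar x => nu x
  | TApp f args => fI _ _ (pre _ _ M) f (fun i => eval nu (args i))
  | TIte _ g t1 t2 =>
      if excluded_middle_informative (sat nu g) then eval nu t1 else eval nu t2
  | TSpF phi => spI _ _ M (SEF phi) nu
  | TSpT s t => spI _ _ M (SET s t) nu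
  | TUnion a b => fun u => eval nu a u \/ eval nu b u
  | TInter a b => fun u => eval nu a u /\ eval nu b u
  | TCompl a => fun u => ~ eval nu a u
  | TEmpty => fun _ => False
  end
with sat (nu : assignment) (phi : formula) {struct phi} : Prop :=
  match phi with
  | FEq _ a b => eval nu a = eval nu b
  | FRel r args => rI _ _ (pre _ _ M) r (fun i => eval nu (args i))
  | FIRel r args => iI _ _ M r (fun i => eval nu (args i))
  | FMem a b => eval nu b (eval nu a)
  | FAnd a b => sat nu a /\ sat nu b
  | FNot a => ~ sat nu a
  | FIte g a b => (sat nu g /\ sat nu a) \/ (~ sat nu g /\ sat nu b)
  | FEx y g a => exists u : U (vsort y), sat (upd nu y u) g /\ sat (upd nu y u) a
  end.

Definition spF (phi : formula) (nu : assignment) : UF -> Prop := spI _ _ M (SEF phi) nu.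
Definition spT {s} (t : term s) (nu : assignment) : UF -> Prop := spI _ _ M (SET s t) nu.

Definition fg_eq (o : option B) : U (emb o) -> UF -> Prop :=
  match o as o return U (emb o) -> UF -> Prop with
  | None => fun v u => v = u
  | Some _ => fun _ _ => False
  end.

Variable D : idefs.

Definition param_upd (r : irel S) (nu : assignment)
    (vals : forall i, U (emb (iarg S r i))) : assignment :=
  fun x =>
    match excluded_middle_informative (exists i, pvar D r i = x) with
    | left h =>
        let w := constructive_indefinite_description _ h in
        eq_rect (pvar D r (proj1_sig w)) (fun z => U (vsort z))
                (vals (proj1_sig w)) x (proj2_sig w)
    | right _ => nu x
    end.

Definition sp_rhs (e : sexpr) (nu : assignment) : UF -> Prop :=
  match e with
  | SET _ t =>
      match t with
      | TConst _ => fun _ => False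
      | TVar _ => fun _ => False
      | TApp f args => fun u =>
          (fmut S f = true /\ exists i, fg_eq (farg S f i) (eval nu (args i)) u)
          \/ exists i, spT (args i) nu u
      | TIte _ g a b => fun u =>
          spF g nu u \/ (sat nu g /\ spT a nu u) \/ (~ sat nu g /\ spT b nu u)
      | TSpF phi => spF phi nu
      | TSpT _ t => spT t nu
      | TUnion a b => fun u => spT a nu u \/ spT b nu u
      | TInter a b => fun u => spT a nu u \/ spT b nu u
      | TCompl a => spT a nu
      | TEmpty => fun _ => False
      end
  | SEF phi =>
      match phi with
      | FEq _ a b => fun u => spT a nu u \/ spT b nu u
      | FRel _ args => fun u => exists i, spT (args i) nu u
      | FIRel r args => fun u =>
          spF (irho D r) (param_upd r nu (fun i => eval nu (args i))) u
          \/ exists i, spT (args i) nu u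
      | FMem a b => fun u => spT a nu u \/ spT b nu u
      | FAnd a b => fun u => spF a nu u \/ spF b nu u
      | FNot a => spF a nu
      | FIte g a b => fun u =>
          spF g nu u \/ (sat nu g /\ spF a nu u) \/ (~ sat nu g /\ spF b nu u)
      | FEx y g a => fun u =>
          (exists v, spF g (upd nu y v) u)
          \/ (exists v, sat (upd nu y v) g /\ spF a (upd nu y v) u)
      end
  end.

Definition support_eqs : Prop :=
  forall (e : sexpr) (nu : assignment), wfe e ->
    forall u, spI _ _ M e nu u <-> sp_rhs e nu u.

Definition ind_eqs : Prop :=
  forall (r : irel S) (nu : assignment),
    iI _ _ M r (fun i => nu (pvar D r i)) <-> sat nu (irho D r).

End Eval.

Section Frame.
Context {UF : Type} {UB : B -> Type}.

(* Th: the background theories, as a constraint on pre-models *)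
Definition frame_model (D : idefs)
    (Th : forall (UF : Type) (UB : B -> Type), premodel UF UB -> Prop)
    (M : model UF UB) : Prop :=
  Th UF UB (pre _ _ M) /\
  support_eqs M D /\ ind_eqs M D /\
  (forall M'' : model UF UB,
     pre _ _ M'' = pre _ _ M ->
     (forall e nu u, wfe e -> spI _ _ M'' e nu u -> spI _ _ M e nu u) ->
     (exists e nu u, wfe e /\ spI _ _ M e nu u /\ ~ spI _ _ M'' e nu u) ->
     ~ support_eqs M'' D) /\
  (forall M'' : model UF UB,
     pre _ _ M'' = pre _ _ M ->
     spI _ _ M'' = spI _ _ M ->
     (forall r vals, iI _ _ M'' r vals -> iI _ _ M r vals) ->
     (exists r vals, iI _ _ M r vals /\ ~ iI _ _ M'' r vals) ->
     ~ ind_eqs M'' D).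

Definition mutation (M M' : model UF UB) : Prop :=
  (forall c, cI _ _ (pre _ _ M) c = cI _ _ (pre _ _ M') c) /\
  (forall r, rI _ _ (pre _ _ M) r = rI _ _ (pre _ _ M') r) /\
  (forall f, fmut S f = false -> fI _ _ (pre _ _ M) f = fI _ _ (pre _ _ M') f).

Definition fg_in (X : UF -> Prop) (o : option B) : U UF UB (emb o) -> Prop :=
  match o as o return U UF UB (emb o) -> Prop with
  | None => fun v => X v
  | Some _ => fun _ => False
  end.

Definition stable_on (M M' : model UF UB) (X : UF -> Prop) : Prop :=
  forall f, fmut S f = true ->
    forall args : forall i, U UF UB (emb (farg S f i)),
      (exists i, fg_in X (farg S f i) (args i)) ->
      fI _ _ (pre _ _ M) f args = fI _ _ (pre _ _ M') f args.

End Frame.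
End FL.

(* Main.v *)
Require Import Defs.
From Stdlib Require Import FunctionalExtensionality PropExtensionality Classical ClassicalEpsilon Eqdep_dec.

Scheme term_mind := Induction for term Sort Prop with formula_mind := Induction for formula Sort Prop.
Combined Scheme tf_mind from term_mind, formula_mind.

Section Proof.
Context {S : signature} {UF : Type} {UB : bsort S -> Type}.
Variable D : @idefs S.

Lemma emb_nSSF (o : option (bsort S)) : emb o <> SSF.
Proof. destruct o; discriminate. Qed.

Lemma gterm_wft_all :
  (forall s (t : @term S s), gterm t -> wft t) /\ (forall phi : @formula S, guard phi -> wff phi).
Proof.
  apply tf_mind; simpl; intros; try tauto; firstorder.
Qed.

Lemma user_gterm_all :
  (forall s (t : @term S s), s <> SSF -> wft t -> gterm t) /\ (forall phi : @formula S, True).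
Proof.
  apply tf_mind; simpl; intros; try tauto.
  - apply H; [apply emb_nSSF|]; auto.
Qed.

Definition mkS (M : @model S UF UB) P : @model S UF UB :=
  {| pre := pre _ _ M; iI := iI _ _ M; spI := P |}.
Definition mkI (M : @model S UF UB) I : @model S UF UB :=
  {| pre := pre _ _ M; iI := I; spI := spI _ _ M |}.

Lemma pre_indep (M1 M2 : @model S UF UB) : pre _ _ M1 = pre _ _ M2 ->
  (forall s (t : @term S s), gterm t -> forall nu, eval M1 nu t = eval M2 nu t) /\
  (forall phi : @formula S, guard phi -> forall nu, sat M1 nu phi <-> sat M2 nu phi).
Proof.
  intros Hp. apply tf_mind; simpl; intros; try tauto.
  - rewrite Hp; auto.
  - rewrite Hp. f_equal. apply functional_extensionality_dep; intros i. auto.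
  - destruct H2 as [Hg [H1' H2']].
    destruct (excluded_middle_informative (sat M1 nu g)) as [a|a];
    destruct (excluded_middle_informative (sat M2 nu g)) as [b|b]; auto;
    exfalso; apply (H Hg nu) in a || apply <- (H Hg nu) in b; tauto.
  - destruct H1; rewrite H, H0; tauto.
  - rewrite Hp. assert (E: (fun i => eval M1 nu (args i)) = (fun i => eval M2 nu (args i))).
    { apply functional_extensionality_dep; intros i. auto. }
    rewrite E; tauto.
  - destruct H1. rewrite (H H1 nu), (H0 H2 nu). tauto.
  - rewrite (H H0 nu). tauto.
  - destruct H2 as [? [? ?]]. rewrite (H H2 nu), (H0 H3 nu), (H1 H4 nu). tauto.
  - destruct H1. split; intros [u Hu]; exists u; rewrite (H H1), (H0 H2) in *; tauto.
Qed.

Lemma presp_indep (M1 M2 : @model S UF UB) : pre _ _ M1 = pre _ _ M2 -> spI _ _ M1 = spI _ _ M2 ->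
  (forall s (t : @term S s), wft t -> forall nu, eval M1 nu t = eval M2 nu t) /\
  (forall phi : @formula S, True).
Proof.
  intros Hp Hs. destruct (pre_indep M1 M2 Hp) as [_ HG].
  apply tf_mind; simpl; intros; try tauto.
  - rewrite Hp; auto.
  - rewrite Hp. f_equal. apply functional_extensionality_dep; intros i. auto.
  - destruct H2 as [Hg [H1' H2']].
    destruct (excluded_middle_informative (sat M1 nu g)) as [a|a];
    destruct (excluded_middle_informative (sat M2 nu g)) as [b|b]; auto;
    exfalso; apply (HG g Hg nu) in a || apply <- (HG g Hg nu) in b; tauto.
  - rewrite Hs; auto.
  - rewrite Hs; auto.
  - destruct H1. rewrite H, H0; auto.
  - destruct H1. rewrite H, H0; auto.
  - rewrite H; auto.
Qed.

Definition agt {s} (t : @term S s) (nu nu' : @assignment S UF UB) :=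
  forall x, freet x t -> nu x = nu' x.
Definition agf (phi : @formula S) (nu nu' : @assignment S UF UB) :=
  forall x, freef x phi -> nu x = nu' x.
Definition age (e : @sexpr S) :=
  match e with SEF phi => agf phi | SET _ t => agt t end.

Lemma upd_agree (nu nu' : @assignment S UF UB) y v x :
  (x <> y -> nu x = nu' x) -> upd nu y v x = upd nu' y v x.
Proof. intros H. unfold upd. destruct (var_eqdec y x); [reflexivity | apply H; congruence]. Qed.

Lemma fv_all (M : @model S UF UB) :
  (forall e nu nu' u, wfe e -> age e nu nu' -> (spI _ _ M e nu u <-> spI _ _ M e nu' u)) ->
  (forall s (t : @term S s), wft t -> forall nu nu', agt t nu nu' -> eval M nu t = eval M nu' t) /\
  (forall phi : @formula S, wff phi -> forall nu nu', agf phi nu nu' -> (sat M nu phi <-> sat M nu' phi)).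
Proof.
  intros Hsp. apply tf_mind; simpl; intros; unfold agt, agf in *; simpl in *.
  - reflexivity.
  - apply H0; reflexivity.
  - f_equal. apply functional_extensionality_dep; intros i. apply H; auto.
    intros x Hx; apply H1; eauto.
  - destruct H2 as [Hg [H1' H2']].
    assert (E: sat M nu g <-> sat M nu' g) by (apply H; [apply gterm_wft_all; auto| intros; apply H3; auto]).
    rewrite (H0 H1' nu nu'), (H1 H2' nu nu') by (intros; apply H3; auto).
    destruct (excluded_middle_informative (sat M nu g)) as [a|a];
    destruct (excluded_middle_informative (sat M nu' g)) as [b|b]; auto; tauto.
  - apply functional_extensionality; intros u. apply propositional_extensionality.
    apply Hsp; simpl; auto.
  - apply functional_extensionality; intros u. apply propositional_extensionality.
    apply Hsp; simpl; auto.
  - destruct H1. rewrite (H H1 nu nu'), (H0 H3 nu nu') by (intros; apply H2; auto). auto.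
  - destruct H1. rewrite (H H1 nu nu'), (H0 H3 nu nu') by (intros; apply H2; auto). auto.
  - rewrite (H H0 nu nu') by auto. auto.
  - reflexivity.
  - destruct H1. rewrite (H H1 nu nu'), (H0 H3 nu nu') by (intros; apply H2; auto). tauto.
  - assert (E: (fun i => eval M nu (args i)) = (fun i => eval M nu' (args i))).
    { apply functional_extensionality_dep; intros i. apply H; auto. intros; apply H1; eauto. }
    rewrite E; tauto.
  - assert (E: (fun i => eval M nu (args i)) = (fun i => eval M nu' (args i))).
    { apply functional_extensionality_dep; intros i. apply H; auto. intros; apply H1; eauto. }
    rewrite E; tauto.
  - destruct H1. rewrite (H H1 nu nu'), (H0 H3 nu nu') by (intros; apply H2; auto). tauto.
  - destruct H1. rewrite (H H1 nu nu'), (H0 H3 nu nu') by (intros; apply H2; auto). tauto.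
  - rewrite (H H0 nu nu') by auto. tauto.
  - destruct H2 as [? [? ?]].
    rewrite (H (proj2 gterm_wft_all _ H2) nu nu'), (H0 H4 nu nu'), (H1 H5 nu nu') by (intros; apply H3; auto). tauto.
  - destruct H1 as [Hg Ha].
    assert (A: forall u, agf g (upd nu y u) (upd nu' y u) /\ agf a (upd nu y u) (upd nu' y u)).
    { intros u; split; intros x Hx; apply upd_agree; intros; apply H2; auto. }
    split; intros [u Hu]; exists u; destruct (A u) as [A1 A2];
      rewrite (H (proj2 gterm_wft_all _ Hg) _ _ A1), (H0 Ha _ _ A2) in *; tauto.
Qed.

Lemma fv_guard (M : @model S UF UB) :
  (forall s (t : @term S s), gterm t -> forall nu nu', agt t nu nu' -> eval M nu t = eval M nu' t) /\
  (forall phi : @formula S, guard phi -> forall nu nu', agf phi nu nu' -> (sat M nu phi <-> sat M nu' phi)).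
Proof.
  pose (M0 := mkS M (fun _ _ _ => False)).
  destruct (pre_indep M M0 eq_refl) as [P1 P2].
  destruct (fv_all M0) as [F1 F2]. { simpl; tauto. }
  split; intros.
  - rewrite (P1 _ _ H nu), (P1 _ _ H nu'). apply F1; auto. apply gterm_wft_all; auto.
  - rewrite (P2 _ H nu), (P2 _ H nu'). apply F2; auto. apply gterm_wft_all; auto.
Qed.

Lemma param_upd_pvar (HD : idefs_wf D) r (nu : @assignment S UF UB) vals i :
  param_upd D r nu vals (pvar D r i) = vals i.
Proof.
  unfold param_upd.
  destruct (excluded_middle_informative (exists j, pvar D r j = pvar D r i)) as [h|h].
  - destruct (constructive_indefinite_description _ h) as [j ej]. simpl.
    assert (j = i) by (apply (proj1 (HD r)); auto). subst j.
    rewrite (UIP_dec var_eqdec ej eq_refl). reflexivity.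
  - exfalso; apply h; exists i; reflexivity.
Qed.

Lemma rhs_transfer (HD : idefs_wf D) (M1 M2 : @model S UF UB) (X : UF -> Prop) e nu u :
  wfe e ->
  (forall g nu', guard g -> (forall w, spI _ _ M1 (SEF g) nu' w -> X w) -> (sat M1 nu' g <-> sat M2 nu' g)) ->
  (forall s (t : @term S s) nu', gterm t -> (forall w, spI _ _ M1 (SET s t) nu' w -> X w) -> eval M1 nu' t = eval M2 nu' t) ->
  (forall e' nu', wfe e' -> (forall w, spI _ _ M1 e' nu' w -> X w) -> spI _ _ M2 e' nu' u -> spI _ _ M1 e' nu' u) ->
  (forall w, sp_rhs M1 D e nu w -> X w) ->
  sp_rhs M2 D e nu u -> sp_rhs M1 D e nu u.
Proof.
  intros Hwf HG HT HP HX.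
  assert (UG : forall o (t : @term S (emb o)), wft t -> gterm t) by (intros; apply (proj1 user_gterm_all); auto; apply emb_nSSF).
  destruct e as [phi | s t]; [destruct phi | destruct t]; simpl in *; unfold spT, spF in *.
  - destruct Hwf; intros [K|K]; [left|right]; apply HP; simpl; auto; intros; apply HX; auto.
  - intros [i H]; exists i; apply HP; simpl; auto; intros; apply HX; eauto.
  -
    assert (E: (fun i => eval M2 nu (args i)) = (fun i => eval M1 nu (args i))).
    { apply functional_extensionality_dep; intros i. symmetry; apply HT; auto.
      intros; apply HX; right; eauto. }
    rewrite E. intros [H|[i H]]; [left|right].
    + apply HP; simpl; auto; try apply (HD r); intros; apply HX; auto.
    + exists i; apply HP; simpl; auto; intros; apply HX; eauto.
  - destruct Hwf; intros [K|K]; [left|right]; apply HP; simpl; auto; intros; apply HX; auto.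
  - destruct Hwf; intros [K|K]; [left|right]; apply HP; simpl; auto; intros; apply HX; auto.
  - intros H; apply HP; simpl; auto.
  - destruct Hwf as [Hg [Ha Hb]].
    assert (HgX : forall w, spI _ _ M1 (SEF phi1) nu w -> X w) by (intros; apply HX; auto).
    assert (E := HG _ _ Hg HgX).
    intros [H|[[H1 H]|[H1 H]]].
    + left; apply HP; simpl; auto. apply gterm_wft_all; auto.
    + right; left. split; [tauto|]. apply HP; simpl; auto. intros; apply HX; right; left; tauto.
    + right; right. split; [tauto|]. apply HP; simpl; auto. intros; apply HX; right; right; tauto.
  - destruct Hwf as [Hg Ha].
    intros [[v H]|[v [H1 H]]].
    + left; exists v. apply HP; simpl; auto. apply gterm_wft_all; auto.
      intros; apply HX; left; eauto.
    + assert (HgX : forall w, spI _ _ M1 (SEF phi1) (upd nu y v) w -> X w) by (intros; apply HX; left; eauto).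
      assert (E := HG _ _ Hg HgX).
      right; exists v. split; [tauto|]. apply HP; simpl; auto. intros; apply HX; right; exists v; tauto.
  - tauto.
  - tauto.
  - intros [[Hm [i H]]|[i H]].
    + left; split; auto; exists i. rewrite HT; auto. intros; apply HX; right; eauto.
    + right; exists i; apply HP; simpl; auto; intros; apply HX; right; eauto.
  - destruct Hwf as [Hg [Ha Hb]].
    assert (HgX : forall w, spI _ _ M1 (SEF g) nu w -> X w) by (intros; apply HX; auto).
    assert (E := HG _ _ Hg HgX).
    intros [H|[[H1 H]|[H1 H]]].
    + left; apply HP; simpl; auto. apply gterm_wft_all; auto.
    + right; left. split; [tauto|]. apply HP; simpl; auto. intros; apply HX; right; left; tauto.
    + right; right. split; [tauto|]. apply HP; simpl; auto. intros; apply HX; right; right; tauto.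
  - intros H; apply HP; simpl; auto.
  - intros H; apply HP; simpl; auto.
  - destruct Hwf; intros [K|K]; [left|right]; apply HP; simpl; auto; intros; apply HX; auto.
  - destruct Hwf; intros [K|K]; [left|right]; apply HP; simpl; auto; intros; apply HX; auto.
  - intros H; apply HP; simpl; auto.
  - tauto.
Qed.

Lemma rhs_fv (HD : idefs_wf D) (M1 M2 : @model S UF UB) e nu nu' u :
  wfe e -> age e nu nu' ->
  (forall g n1 n2, guard g -> agf g n1 n2 -> (sat M1 n1 g <-> sat M2 n2 g)) ->
  (forall s (t : @term S s) n1 n2, gterm t -> agt t n1 n2 -> eval M1 n1 t = eval M2 n2 t) ->
  (forall e' n1 n2, wfe e' -> age e' n1 n2 -> spI _ _ M1 e' n1 u -> spI _ _ M2 e' n2 u) ->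
  sp_rhs M1 D e nu u -> sp_rhs M2 D e nu' u.
Proof.
  intros Hwf Hag HG HT HP.
  assert (UG : forall o (t : @term S (emb o)), wft t -> gterm t) by (intros; apply (proj1 user_gterm_all); auto; apply emb_nSSF).
  destruct e as [phi | s t]; [destruct phi | destruct t]; simpl in *; unfold spT, spF, agf, agt in *; simpl in *.
  - destruct Hwf; intros [K|K]; [left|right]; (eapply HP; [| |exact K]); simpl; auto; intros x Hx; apply Hag; auto.
  - intros [i K]; exists i; (eapply HP; [| |exact K]); simpl; auto; intros x Hx; apply Hag; eauto.
  - assert (E: (fun i => eval M1 nu (args i)) = (fun i => eval M2 nu' (args i))).
    { apply functional_extensionality_dep; intros i. apply HT; auto.
      intros x Hx; apply Hag; eauto. }
    rewrite E. intros [K|[i K]]; [left|right].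
    + (eapply HP; [| |exact K]); simpl. apply (HD r).
      intros x Hx. destruct (proj2 (proj2 (proj2 (HD r))) x Hx) as [i ->].
      rewrite !param_upd_pvar; auto.
    + exists i; (eapply HP; [| |exact K]); simpl; auto; intros x Hx; apply Hag; eauto.
  - destruct Hwf; intros [K|K]; [left|right]; (eapply HP; [| |exact K]); simpl; auto; intros x Hx; apply Hag; auto.
  - destruct Hwf; intros [K|K]; [left|right]; (eapply HP; [| |exact K]); simpl; auto; intros x Hx; apply Hag; auto.
  - intros K; (eapply HP; [| |exact K]); simpl; auto.
  - destruct Hwf as [Hg [Ha Hb]].
    assert (E : sat M1 nu phi1 <-> sat M2 nu' phi1) by (apply HG; auto; intros x Hx; apply Hag; auto).
    intros [K|[[K1 K]|[K1 K]]].
    + left; (eapply HP; [| |exact K]); simpl; auto. apply gterm_wft_all; auto. intros x Hx; apply Hag; auto.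
    + right; left. split; [tauto|]. (eapply HP; [| |exact K]); simpl; auto. intros x Hx; apply Hag; auto.
    + right; right. split; [tauto|]. (eapply HP; [| |exact K]); simpl; auto. intros x Hx; apply Hag; auto.
  - destruct Hwf as [Hg Ha].
    assert (A: forall v, agf phi1 (upd nu y v) (upd nu' y v) /\ agf phi2 (upd nu y v) (upd nu' y v)).
    { intros v; split; intros x Hx; apply upd_agree; intros; apply Hag; auto. }
    intros [[v K]|[v [K1 K]]].
    + left; exists v. (eapply HP; [| |exact K]); simpl. apply gterm_wft_all; auto. apply A.
    + right; exists v. split. apply (HG _ _ _ Hg (proj1 (A v))); auto.
      (eapply HP; [| |exact K]); simpl; auto. apply A.
  - tauto.
  - tauto.
  - intros [[Hm [i K]]|[i K]].
    + left; split; auto; exists i. erewrite <- HT; eauto; intros x Hx; apply Hag; eauto.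
    + right; exists i; (eapply HP; [| |exact K]); simpl; auto; intros x Hx; apply Hag; eauto.
  - destruct Hwf as [Hg [Ha Hb]].
    assert (E : sat M1 nu g <-> sat M2 nu' g) by (apply HG; auto; intros x Hx; apply Hag; auto).
    intros [K|[[K1 K]|[K1 K]]].
    + left; (eapply HP; [| |exact K]); simpl; auto. apply gterm_wft_all; auto. intros x Hx; apply Hag; auto.
    + right; left. split; [tauto|]. (eapply HP; [| |exact K]); simpl; auto. intros x Hx; apply Hag; auto.
    + right; right. split; [tauto|]. (eapply HP; [| |exact K]); simpl; auto. intros x Hx; apply Hag; auto.
  - intros K; (eapply HP; [| |exact K]); simpl; auto.
  - intros K; (eapply HP; [| |exact K]); simpl; auto.
  - destruct Hwf; intros [K|K]; [left|right]; (eapply HP; [| |exact K]); simpl; auto; intros x Hx; apply Hag; auto.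
  - destruct Hwf; intros [K|K]; [left|right]; (eapply HP; [| |exact K]); simpl; auto; intros x Hx; apply Hag; auto.
  - intros K; (eapply HP; [| |exact K]); simpl; auto.
  - tauto.
Qed.

Lemma rhs_same (HD : idefs_wf D) (M1 M2 : @model S UF UB) e nu u :
  pre _ _ M1 = pre _ _ M2 -> wfe e ->
  (forall e' n u, spI _ _ M2 e' n u -> spI _ _ M1 e' n u) ->
  sp_rhs M2 D e nu u -> sp_rhs M1 D e nu u.
Proof.
  intros Hp Hw Hs. destruct (pre_indep M1 M2 Hp) as [P1 P2].
  apply (rhs_transfer HD M1 M2 (fun _ => True)); auto.
Qed.

Definition Spref (M : @model S UF UB) P :=
  forall e nu u, wfe e -> sp_rhs (mkS M P) D e nu u -> P e nu u.

Lemma sp_lfp (HD : idefs_wf D) Th (M : @model S UF UB) P :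
  frame_model D Th M -> Spref M P -> forall e nu u, wfe e -> spI _ _ M e nu u -> P e nu u.
Proof.
  intros Hfm HP.
  pose (L := fun e nu u => forall P, Spref M P -> P e nu u).
  assert (LP : Spref M L).
  { intros e nu u Hw H Q HQ. apply HQ; auto.
    apply (rhs_same HD (mkS M Q) (mkS M L)); auto. simpl. intros e' n w Hl; apply Hl; auto. }
  assert (Lfix : forall e nu u, wfe e -> L e nu u -> sp_rhs (mkS M L) D e nu u).
  { pose (P' := fun e nu u => L e nu u /\ (wfe e -> sp_rhs (mkS M L) D e nu u)).
    assert (HP' : Spref M P').
    { intros e nu u Hw H.
      assert (H' : sp_rhs (mkS M L) D e nu u).
      { apply (rhs_same HD (mkS M L) (mkS M P')); auto. simpl. intros e' n w [Hl _]; auto. }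
      split; auto. }
    intros e nu u Hw Hl. apply (Hl P' HP'); auto. }
  destruct Hfm as [_ [Hse [_ [H1 _]]]].
  assert (Hsub : forall e nu u, wfe e -> spI _ _ M e nu u -> L e nu u).
  { intros e nu u Hw Hs. apply NNPP; intros Hn.
    apply (H1 (mkS M L) eq_refl).
    - simpl. intros e' n w Hw' Hl. apply Hl. intros e2 n2 w2 Hw2 Hr.
      apply Hse; auto.
    - exists e, nu, u. auto.
    - intros e' n Hw' w. simpl. split; [apply Lfix; auto| apply LP; auto]. }
  intros e nu u Hw Hs. apply (Hsub e nu u Hw Hs P HP).
Qed.

Lemma sp_fv (HD : idefs_wf D) Th (M : @model S UF UB) :
  frame_model D Th M -> forall e nu nu' u, wfe e -> age e nu nu' -> spI _ _ M e nu u -> spI _ _ M e nu' u.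
Proof.
  intros Hfm.
  assert (Hse : support_eqs M D) by apply Hfm.
  pose (P := fun e nu u => forall nu', age e nu nu' -> spI _ _ M e nu' u).
  assert (HS : Spref M P).
  { intros e nu u Hw H nu' Ha. apply Hse; auto.
    apply (rhs_fv HD (mkS M P) M e nu nu'); try assumption.
    - intros g n1 n2 Hg Hag. rewrite (proj2 (pre_indep (mkS M P) M eq_refl) g Hg n1).
      apply fv_guard; auto.
    - intros s t n1 n2 Hg Hag. rewrite (proj1 (pre_indep (mkS M P) M eq_refl) s t Hg n1).
      apply fv_guard; auto.
    - simpl. intros e' n1 n2 Hw' Ha' Hs. apply Hs; auto. }
  intros e nu nu' u Hw Ha Hs. apply (sp_lfp HD Th M _ Hfm HS e nu u Hw Hs nu' Ha).
Qed.

Definition polar (p : bool) (A B : Prop) := if p then (A -> B) else (B -> A).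

Lemma mono (M1 M2 : @model S UF UB) :
  pre _ _ M1 = pre _ _ M2 -> spI _ _ M1 = spI _ _ M2 ->
  (forall r vals, iI _ _ M1 r vals -> iI _ _ M2 r vals) ->
  (forall s (t : @term S s), True) /\
  (forall phi : @formula S, wff phi -> forall p nu, ipos p phi -> polar p (sat M1 nu phi) (sat M2 nu phi)).
Proof.
  intros Hp Hs Hi. destruct (presp_indep M1 M2 Hp Hs) as [T _].
  destruct (pre_indep M1 M2 Hp) as [_ G].
  apply tf_mind; simpl; intros; auto; unfold polar in *.
  - destruct H1. rewrite (T _ _ H1 nu), (T _ _ H3 nu). destruct p; auto.
  - assert (E: (fun i => eval M1 nu (args i)) = (fun i => eval M2 nu (args i))).
    { apply functional_extensionality_dep; intros i. apply T; auto. }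
    rewrite E, Hp. destruct p; auto.
  - assert (E: (fun i => eval M1 nu (args i)) = (fun i => eval M2 nu (args i))).
    { apply functional_extensionality_dep; intros i. apply T; auto. }
    rewrite E. subst p. auto.
  - destruct H1. rewrite (T _ _ H1 nu), (T _ _ H3 nu). destruct p; auto.
  - destruct H1, H2. specialize (H H1 p nu H2). specialize (H0 H3 p nu H4).
    destruct p; tauto.
  - specialize (H H0 (negb p) nu H1). destruct p; simpl in *; tauto.
  - destruct H2 as [Hg [Ha Hb]]. destruct H3.
    specialize (H0 Ha p nu H2). specialize (H1 Hb p nu H3).
    destruct p; rewrite (G _ Hg nu); tauto.
  - destruct H1 as [Hg Ha].
    destruct p; intros [u Hu]; exists u; rewrite (G _ Hg) in *; specialize (H0 Ha _ (upd nu y u) H2); simpl in H0; tauto.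
Qed.

Definition Ipref (M : @model S UF UB) I :=
  forall r nu, sat (mkI M I) nu (irho D r) -> I r (fun i => nu (pvar D r i)).

Lemma age_sym e (n1 n2 : @assignment S UF UB) : age e n1 n2 -> age e n2 n1.
Proof. destruct e; simpl; unfold agf, agt; intros H x Hx; symmetry; auto. Qed.

Lemma ii_lfp (HD : idefs_wf D) Th (M : @model S UF UB) I :
  frame_model D Th M -> Ipref M I -> forall r vals, iI _ _ M r vals -> I r vals.
Proof.
  intros Hfm HI.
  assert (Hsp : forall e nu nu' u, wfe e -> age e nu nu' -> (spI _ _ M e nu u <-> spI _ _ M e nu' u)).
  { intros; split; apply (sp_fv HD Th M Hfm); auto; apply age_sym; auto. }
  destruct Hfm as [_ [Hse [Hie [_ H2]]]].
  assert (MO : forall J1 J2, (forall r vals, J1 r vals -> J2 r vals) ->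
     forall r nu, sat (mkI M J1) nu (irho D r) -> sat (mkI M J2) nu (irho D r)).
  { intros J1 J2 Hj r nu. destruct (mono (mkI M J1) (mkI M J2) eq_refl eq_refl Hj) as [_ A].
    apply (A _ (proj1 (proj2 (HD r))) true nu (proj1 (proj2 (proj2 (HD r))))). }
  pose (L := fun r vals => forall J, Ipref M J -> J r vals).
  assert (LP : Ipref M L).
  { intros r nu H J HJ. apply HJ. apply (MO L J); auto. intros r' v' Hl; apply Hl; auto. }
  assert (fvL : forall r nu nu', (forall i, nu (pvar D r i) = nu' (pvar D r i)) ->
     sat (mkI M L) nu (irho D r) -> sat (mkI M L) nu' (irho D r)).
  { intros r nu nu' Hag. apply (proj2 (fv_all (mkI M L) Hsp)). apply (HD r).
    intros x Hx. destruct (proj2 (proj2 (proj2 (HD r))) x Hx) as [i ->]. auto. }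
  assert (Lfix : forall r nu, L r (fun i => nu (pvar D r i)) -> sat (mkI M L) nu (irho D r)).
  { pose (I' := fun r vals => L r vals /\ forall nu, (fun i => nu (pvar D r i)) = vals -> sat (mkI M L) nu (irho D r)).
    assert (HI' : Ipref M I').
    { intros r nu H.
      assert (Hs : sat (mkI M L) nu (irho D r)) by (apply (MO I' L); auto; intros ? ? [? ?]; auto).
      split; [apply LP; auto|]. intros nu' E. apply (fvL r nu); auto.
      intros i. exact (f_equal (fun h => h i) (eq_sym E)). }
    intros r nu Hl. apply (proj2 (Hl I' HI')). reflexivity. }
  assert (LsubI : forall r vals, L r vals -> iI _ _ M r vals).
  { intros r vals Hl. apply Hl. intros r' nu H. apply Hie.
    destruct (mono (mkI M (iI _ _ M)) M eq_refl eq_refl (fun _ _ h => h)) as [_ A].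
    apply (A _ (proj1 (proj2 (HD r'))) true nu (proj1 (proj2 (proj2 (HD r'))))); auto. }
  assert (Hsub : forall r vals, iI _ _ M r vals -> L r vals).
  { intros r vals Hi. apply NNPP; intros Hn.
    apply (H2 (mkI M L) eq_refl eq_refl LsubI).
    - exists r, vals; auto.
    - intros r' nu. simpl. split; [apply Lfix | apply LP]. }
  intros r vals Hi. apply (Hsub r vals Hi I HI).
Qed.

Lemma guard_claim (M M' : @model S UF UB) X :
  support_eqs M D -> mutation M M' -> stable_on M M' X ->
  (forall s (t : @term S s), gterm t -> forall nu, (forall w, spI _ _ M (SET s t) nu w -> X w) -> eval M nu t = eval M' nu t) /\
  (forall phi : @formula S, guard phi -> forall nu, (forall w, spI _ _ M (SEF phi) nu w -> X w) -> (sat M nu phi <-> sat M' nu phi)).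
Proof.
  intros Hse [Hc [Hr Hf]] Hst.
  assert (W1 := proj1 gterm_wft_all). assert (W2 := proj2 gterm_wft_all).
  apply tf_mind; intros; try (simpl in *; tauto).
  - simpl. apply Hc.
  - assert (Hw : wfe (SET _ (TApp f args))) by (apply W1; auto).
    assert (Hx : forall w, sp_rhs M D (SET _ (TApp f args)) nu w -> X w) by (intros; apply H1; apply Hse; auto).
    simpl in Hx, H0. unfold spT in Hx.
    assert (E: (fun i => eval M nu (args i)) = (fun i => eval M' nu (args i))).
    { apply functional_extensionality_dep; intros i. apply H; auto. intros; apply Hx; right; eauto. }
    simpl. rewrite E.
    destruct (fmut S f) eqn:Em.
    + apply Hst; auto. destruct (fmut_fg S f Em) as [i Hi]. exists i.
      assert (Ei := f_equal (fun h => h i) E). simpl in Ei. rewrite <- Ei.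
      assert (K : forall u, fg_eq (farg S f i) (eval M nu (args i)) u -> X u) by (intros; apply Hx; left; eauto).
      revert K. generalize (eval M nu (args i)). rewrite Hi. simpl. intros v K; apply K; reflexivity.
    + rewrite (Hf f Em). reflexivity.
  - simpl in H2. destruct H2 as [Hg [Ha Hb]].
    assert (Hw : wfe (SET _ (TIte s g t1 t2))) by (apply W1; simpl; auto).
    assert (Hx : forall w, sp_rhs M D (SET _ (TIte s g t1 t2)) nu w -> X w) by (intros; apply H3; apply Hse; auto).
    simpl in Hx. unfold spT, spF in Hx.
    assert (E : sat M nu g <-> sat M' nu g) by (apply H; auto).
    simpl.
    destruct (excluded_middle_informative (sat M nu g)) as [a|a];
    destruct (excluded_middle_informative (sat M' nu g)) as [b|b]; try tauto.
    + apply H0; auto; intros; apply Hx; tauto.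
    + apply H1; auto; intros; apply Hx; tauto.
  - simpl in H1. destruct H1.
    assert (Hw : wfe (SEF (FEq s t1 t2))) by (apply W2; simpl; auto).
    assert (Hx : forall w, sp_rhs M D (SEF (FEq s t1 t2)) nu w -> X w) by (intros; apply H2; apply Hse; auto).
    simpl in Hx. unfold spT in Hx. simpl.
    rewrite (H H1 nu), (H0 H3 nu) by (intros; apply Hx; tauto). tauto.
  - assert (Hw : wfe (SEF (FRel r args))) by (apply W2; auto).
    assert (Hx : forall w, sp_rhs M D (SEF (FRel r args)) nu w -> X w) by (intros; apply H1; apply Hse; auto).
    simpl in Hx, H0. unfold spT in Hx.
    assert (E: (fun i => eval M nu (args i)) = (fun i => eval M' nu (args i))).
    { apply functional_extensionality_dep; intros i. apply H; auto. intros; apply Hx; eauto. }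
    simpl. rewrite E, Hr. tauto.
  - simpl in H1. destruct H1.
    assert (Hw : wfe (SEF (FAnd a b))) by (apply W2; simpl; auto).
    assert (Hx : forall w, sp_rhs M D (SEF (FAnd a b)) nu w -> X w) by (intros; apply H2; apply Hse; auto).
    simpl in Hx. unfold spF in Hx. simpl.
    rewrite (H H1 nu), (H0 H3 nu) by (intros; apply Hx; tauto). tauto.
  - simpl in H0.
    assert (Hw : wfe (SEF (FNot a))) by (apply W2; simpl; auto).
    assert (Hx : forall w, sp_rhs M D (SEF (FNot a)) nu w -> X w) by (intros; apply H1; apply Hse; auto).
    simpl in Hx. unfold spF in Hx. simpl.
    rewrite (H H0 nu) by (intros; apply Hx; tauto). tauto.
  - simpl in H2. destruct H2 as [Hg [Ha Hb]].
    assert (Hw : wfe (SEF (FIte g a b))) by (apply W2; simpl; auto).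
    assert (Hx : forall w, sp_rhs M D (SEF (FIte g a b)) nu w -> X w) by (intros; apply H3; apply Hse; auto).
    simpl in Hx. unfold spF in Hx. simpl.
    assert (E : sat M nu g <-> sat M' nu g) by (apply H; auto).
    destruct (classic (sat M nu g)).
    + rewrite (H0 Ha nu) by (intros; apply Hx; tauto). tauto.
    + rewrite (H1 Hb nu) by (intros; apply Hx; tauto). tauto.
  - simpl in H1. destruct H1 as [Hg Ha].
    assert (Hw : wfe (SEF (FEx y g a))) by (apply W2; simpl; auto).
    assert (Hx : forall w, sp_rhs M D (SEF (FEx y g a)) nu w -> X w) by (intros; apply H2; apply Hse; auto).
    simpl in Hx. unfold spF in Hx. simpl.
    split; intros [u Hu]; exists u.
    + assert (E : sat M (upd nu y u) g <-> sat M' (upd nu y u) g) by (apply H; auto; intros; apply Hx; eauto).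
      rewrite <- E. rewrite <- (H0 Ha) by (intros; apply Hx; right; exists u; tauto). tauto.
    + assert (E : sat M (upd nu y u) g <-> sat M' (upd nu y u) g) by (apply H; auto; intros; apply Hx; eauto).
      rewrite E. rewrite (H0 Ha) by (intros; apply Hx; right; exists u; tauto). tauto.
Qed.

Lemma mutation_sym (M M' : @model S UF UB) : mutation M M' -> mutation M' M.
Proof. intros [A [B C]]; split; [|split]; intros; symmetry; auto. Qed.

Lemma stable_sym (M M' : @model S UF UB) X : stable_on M M' X -> stable_on M' M X.
Proof. intros H f Hf args Ha; symmetry; auto. Qed.

Lemma supp_sub (HD : idefs_wf D) Th (M M' : @model S UF UB) X :
  support_eqs M D -> frame_model D Th M' -> mutation M M' -> stable_on M M' X ->
  forall e nu u, wfe e -> (forall w, spI _ _ M e nu w -> X w) -> spI _ _ M' e nu u -> spI _ _ M e nu u.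
Proof.
  intros Hse Hfm' Hmu Hst.
  assert (Hse' : support_eqs M' D) by apply Hfm'.
  destruct (guard_claim M M' X Hse Hmu Hst) as [GT GF].
  pose (P := fun e nu u => spI _ _ M' e nu u /\ ((forall w, spI _ _ M e nu w -> X w) -> spI _ _ M e nu u)).
  assert (HP : Spref M' P).
  { intros e nu u Hw H. split.
    - apply Hse'; auto. apply (rhs_same HD M' (mkS M' P)); auto. simpl. intros ? ? ? [? ?]; auto.
    - intros HX. apply Hse; auto. apply (rhs_transfer HD M (mkS M' P) X e nu u Hw); auto.
      + intros g n Hg Hx. rewrite (proj2 (pre_indep (mkS M' P) M' eq_refl) g Hg n). auto.
      + intros s t n Hg Hx. rewrite (proj1 (pre_indep (mkS M' P) M' eq_refl) s t Hg n). auto.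
      + simpl. intros e' n Hw' Hx [_ K]. auto.
      + intros w Hw'. apply HX. apply Hse; auto. }
  intros e nu u Hw HX Hs. apply (proj2 (sp_lfp HD Th M' P Hfm' HP e nu u Hw Hs) HX).
Qed.

Lemma supp_eq (HD : idefs_wf D) Th (M M' : @model S UF UB) X :
  frame_model D Th M -> frame_model D Th M' -> mutation M M' -> stable_on M M' X ->
  forall e nu, wfe e -> (forall w, spI _ _ M e nu w -> X w) -> forall u, spI _ _ M e nu u <-> spI _ _ M' e nu u.
Proof.
  intros Hfm Hfm' Hmu Hst e nu Hw HX u.
  assert (A := supp_sub HD Th M M' X (proj1 (proj2 Hfm)) Hfm' Hmu Hst e nu).
  assert (B := supp_sub HD Th M' M X (proj1 (proj2 Hfm')) Hfm (mutation_sym _ _ Hmu) (stable_sym _ _ _ Hst) e nu).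
  split; intros H; auto.
Qed.

Lemma term_claim (HD : idefs_wf D) Th (M M' : @model S UF UB) X :
  frame_model D Th M -> frame_model D Th M' -> mutation M M' -> stable_on M M' X ->
  (forall s (t : @term S s), wft t -> forall nu, (forall w, spI _ _ M (SET s t) nu w -> X w) -> eval M nu t = eval M' nu t) /\
  (forall phi : @formula S, True).
Proof.
  intros Hfm Hfm' Hmu Hst.
  assert (Hse : support_eqs M D) by apply Hfm.
  destruct (guard_claim M M' X Hse Hmu Hst) as [GT GF].
  assert (UG : forall o (t : @term S (emb o)), wft t -> gterm t) by (intros; apply (proj1 user_gterm_all); auto; apply emb_nSSF).
  assert (SE := supp_eq HD Th M M' X Hfm Hfm' Hmu Hst).
  apply tf_mind; intros; auto.
  - simpl in H2. destruct H2 as [Hg [Ha Hb]].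
    assert (Hw : wfe (SET _ (TIte s g t1 t2))) by (simpl; auto).
    assert (Hx : forall w, sp_rhs M D (SET _ (TIte s g t1 t2)) nu w -> X w) by (intros; apply H3; apply Hse; auto).
    simpl in Hx. unfold spT, spF in Hx.
    assert (E : sat M nu g <-> sat M' nu g) by (apply GF; auto).
    simpl.
    destruct (excluded_middle_informative (sat M nu g)) as [a|a];
    destruct (excluded_middle_informative (sat M' nu g)) as [b|b]; try tauto.
    + apply H0; auto; intros; apply Hx; tauto.
    + apply H1; auto; intros; apply Hx; tauto.
  - assert (Hw : wfe (SET _ (TSpF phi))) by auto.
    assert (Hx : forall w, sp_rhs M D (SET _ (TSpF phi)) nu w -> X w) by (intros; apply H1; apply Hse; auto).
    simpl in Hx. unfold spF in Hx. simpl.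
    apply functional_extensionality; intros u. apply propositional_extensionality. apply SE; auto.
  - assert (Hw : wfe (SET _ (TSpT s t))) by auto.
    assert (Hx : forall w, sp_rhs M D (SET _ (TSpT s t)) nu w -> X w) by (intros; apply H1; apply Hse; auto).
    simpl in Hx. unfold spT in Hx. simpl.
    apply functional_extensionality; intros u. apply propositional_extensionality. apply SE; auto.
  - assert (Hw : wfe (SET _ (TUnion a b))) by auto.
    assert (Hx : forall w, sp_rhs M D (SET _ (TUnion a b)) nu w -> X w) by (intros; apply H2; apply Hse; auto).
    simpl in Hx, H1. unfold spT in Hx. simpl. destruct H1.
    rewrite (H H1 nu), (H0 H3 nu) by (intros; apply Hx; tauto). auto.
  - assert (Hw : wfe (SET _ (TInter a b))) by auto.
    assert (Hx : forall w, sp_rhs M D (SET _ (TInter a b)) nu w -> X w) by (intros; apply H2; apply Hse; auto).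
    simpl in Hx, H1. unfold spT in Hx. simpl. destruct H1.
    rewrite (H H1 nu), (H0 H3 nu) by (intros; apply Hx; tauto). auto.
  - assert (Hw : wfe (SET _ (TCompl a))) by auto.
    assert (Hx : forall w, sp_rhs M D (SET _ (TCompl a)) nu w -> X w) by (intros; apply H1; apply Hse; auto).
    simpl in Hx, H0. unfold spT in Hx. simpl.
    rewrite (H H0 nu) by (intros; apply Hx; tauto). auto.
Qed.

Definition GM (M : @model S UF UB) (X : UF -> Prop) r vals :=
  forall nu, (forall i, nu (pvar D r i) = vals i) -> forall w, spI _ _ M (SEF (irho D r)) nu w -> X w.

Lemma GM_of (HD : idefs_wf D) Th (M : @model S UF UB) X r args nu :
  frame_model D Th M -> wff (FIRel r args) ->
  (forall w, spI _ _ M (SEF (FIRel r args)) nu w -> X w) ->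
  GM M X r (fun i => eval M nu (args i)).
Proof.
  intros Hfm Hw HX nu' Hnu w Hs. apply HX. apply (proj1 (proj2 Hfm)); auto.
  simpl. left. unfold spF.
  apply (sp_fv HD Th M Hfm (SEF (irho D r)) nu'); auto. apply (HD r).
  simpl. intros x Hx. destruct (proj2 (proj2 (proj2 (HD r))) x Hx) as [i ->].
  rewrite param_upd_pvar; auto.
Qed.

Lemma trans (HD : idefs_wf D) Th (M M' : @model S UF UB) X I :
  frame_model D Th M -> frame_model D Th M' -> mutation M M' -> stable_on M M' X ->
  (forall r vals, I r vals -> GM M X r vals -> iI _ _ M' r vals) ->
  (forall s (t : @term S s), True) /\
  (forall phi : @formula S, wff phi -> forall p nu, ipos p phi ->
     (forall w, spI _ _ M (SEF phi) nu w -> X w) ->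
     polar p (sat (mkI M I) nu phi) (sat M' nu phi)).
Proof.
  intros Hfm Hfm' Hmu Hst HI.
  assert (Hse : support_eqs M D) by apply Hfm.
  destruct (guard_claim M M' X Hse Hmu Hst) as [GT GF].
  destruct (term_claim HD Th M M' X Hfm Hfm' Hmu Hst) as [TC _].
  destruct (presp_indep (mkI M I) M eq_refl eq_refl) as [PT _].
  destruct (pre_indep (mkI M I) M eq_refl) as [_ PG].
  assert (ET : forall s (t : @term S s) nu, wft t -> (forall w, spI _ _ M (SET s t) nu w -> X w) -> eval (mkI M I) nu t = eval M' nu t).
  { intros. rewrite PT; auto. }
  assert (EG : forall g nu, guard g -> (forall w, spI _ _ M (SEF g) nu w -> X w) -> (sat (mkI M I) nu g <-> sat M' nu g)).
  { intros. rewrite PG; auto. }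
  apply tf_mind; intros; auto; unfold polar.
  - assert (Hx : forall w, sp_rhs M D (SEF (FEq s t1 t2)) nu w -> X w) by (intros; apply H3; apply Hse; auto).
    simpl in Hx, H1. unfold spT in Hx. destruct H1. simpl.
    rewrite (ET _ _ _ H1), (ET _ _ _ H4) by (intros; apply Hx; tauto). destruct p; auto.
  - assert (Hx : forall w, sp_rhs M D (SEF (FRel r args)) nu w -> X w) by (intros; apply H2; apply Hse; auto).
    simpl in Hx, H0. unfold spT in Hx.
    assert (E: (fun i => eval (mkI M I) nu (args i)) = (fun i => eval M' nu (args i))).
    { apply functional_extensionality_dep; intros i. apply ET; auto. intros; apply Hx; eauto. }
    simpl. rewrite E, (proj1 (proj2 Hmu)). destruct p; auto.
  - simpl in H1. subst p.
    assert (G := GM_of HD Th M X r args nu Hfm H0 H2).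
    assert (Hx : forall w, sp_rhs M D (SEF (FIRel r args)) nu w -> X w) by (intros; apply H2; apply Hse; auto).
    simpl in Hx, H0. unfold spT in Hx.
    assert (E: (fun i => eval (mkI M I) nu (args i)) = (fun i => eval M nu (args i))).
    { apply functional_extensionality_dep; intros i. apply PT; auto. }
    assert (E': (fun i => eval M nu (args i)) = (fun i => eval M' nu (args i))).
    { apply functional_extensionality_dep; intros i. apply TC; auto. intros; apply Hx; eauto. }
    simpl. rewrite E. intros Hi. rewrite <- E'. apply HI; auto.
  - assert (Hx : forall w, sp_rhs M D (SEF (FMem a b)) nu w -> X w) by (intros; apply H3; apply Hse; auto).
    simpl in Hx, H1. unfold spT in Hx. destruct H1. simpl.
    rewrite (ET _ _ _ H1), (ET _ _ _ H4) by (intros; apply Hx; tauto). destruct p; auto.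
  - assert (Hx : forall w, sp_rhs M D (SEF (FAnd a b)) nu w -> X w) by (intros; apply H3; apply Hse; auto).
    simpl in Hx, H1, H2. unfold spF in Hx. destruct H1, H2. simpl.
    assert (A := H H1 p nu H2 (fun w h => Hx w (or_introl h))).
    assert (B := H0 H4 p nu H5 (fun w h => Hx w (or_intror h))).
    unfold polar in A, B. destruct p; tauto.
  - assert (Hx : forall w, sp_rhs M D (SEF (FNot a)) nu w -> X w) by (intros; apply H2; apply Hse; auto).
    simpl in Hx, H0, H1. unfold spF in Hx. simpl.
    assert (A := H H0 (negb p) nu H1 Hx).
    unfold polar in A. destruct p; simpl in A; tauto.
  - assert (Hx : forall w, sp_rhs M D (SEF (FIte g a b)) nu w -> X w) by (intros; apply H4; apply Hse; auto).
    simpl in Hx, H2, H3. unfold spF in Hx. destruct H2 as [Hg [Ha Hb]]. destruct H3. simpl.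
    assert (E := EG g nu Hg (fun w h => Hx w (or_introl h))).
    destruct (classic (sat M' nu g)).
    + assert (A := H0 Ha p nu H2 (fun w h => Hx w (or_intror (or_introl (conj (proj1 (PG g Hg nu) (proj2 E H5)) h))))).
      unfold polar in A. destruct p; tauto.
    + assert (A := H1 Hb p nu H3 (fun w h => Hx w (or_intror (or_intror (conj (fun k => H5 (proj1 E (proj2 (PG g Hg nu) k))) h))))).
      unfold polar in A. destruct p; tauto.
  - assert (Hx : forall w, sp_rhs M D (SEF (FEx y g a)) nu w -> X w) by (intros; apply H3; apply Hse; auto).
    simpl in Hx, H1, H2. unfold spF in Hx. destruct H1 as [Hg Ha]. simpl.
    assert (E : forall u, sat (mkI M I) (upd nu y u) g <-> sat M' (upd nu y u) g).
    { intros u. apply EG; auto. intros; apply Hx; left; eauto. }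
    assert (A : forall u, sat M' (upd nu y u) g -> polar p (sat (mkI M I) (upd nu y u) a) (sat M' (upd nu y u) a)).
    { intros u Hu. apply H0; auto. intros w h; apply Hx; right; exists u; split; auto.
      apply (PG g Hg). apply E; auto. }
    unfold polar in A.
    destruct p; intros [u Hu]; exists u; specialize (E u); specialize (A u); tauto.
Qed.

Lemma irel_sub (HD : idefs_wf D) Th (M M' : @model S UF UB) X :
  frame_model D Th M -> frame_model D Th M' -> mutation M M' -> stable_on M M' X ->
  forall r vals, GM M X r vals -> iI _ _ M r vals -> iI _ _ M' r vals.
Proof.
  intros Hfm Hfm' Hmu Hst.
  pose (I := fun r vals => iI _ _ M r vals /\ (GM M X r vals -> iI _ _ M' r vals)).
  assert (HI : Ipref M I).
  { intros r nu H. split.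
    - apply (proj1 (proj2 (proj2 Hfm))).
      destruct (mono (mkI M I) M eq_refl eq_refl (fun r v h => proj1 h)) as [_ A].
      apply (A _ (proj1 (proj2 (HD r))) true nu (proj1 (proj2 (proj2 (HD r))))); auto.
    - intros G. apply (proj1 (proj2 (proj2 Hfm'))).
      destruct (trans HD Th M M' X I Hfm Hfm' Hmu Hst) as [_ A].
      { intros r' v' [_ K] G'; auto. }
      apply (A _ (proj1 (proj2 (HD r))) true nu (proj1 (proj2 (proj2 (HD r))))); auto.
      apply G; auto. }
  intros r vals G Hi. apply (proj2 (ii_lfp HD Th M I Hfm HI r vals Hi) G).
Qed.

Lemma main_claim (HD : idefs_wf D) Th (M M' : @model S UF UB) X :
  frame_model D Th M -> frame_model D Th M' -> mutation M M' -> stable_on M M' X ->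
  (forall s (t : @term S s), True) /\
  (forall phi : @formula S, wff phi -> forall nu,
     (forall w, spI _ _ M (SEF phi) nu w -> X w) -> (sat M nu phi <-> sat M' nu phi)).
Proof.
  intros Hfm Hfm' Hmu Hst.
  assert (Hse : support_eqs M D) by apply Hfm.
  destruct (term_claim HD Th M M' X Hfm Hfm' Hmu Hst) as [TC _].
  assert (SE := supp_eq HD Th M M' X Hfm Hfm' Hmu Hst).
  apply tf_mind; intros; auto.
  - assert (Hx : forall w, sp_rhs M D (SEF (FEq s t1 t2)) nu w -> X w) by (intros; apply H2; apply Hse; auto).
    simpl in Hx, H1. unfold spT in Hx. destruct H1. simpl.
    rewrite (TC _ _ H1 nu), (TC _ _ H3 nu) by (intros; apply Hx; tauto). tauto.
  - assert (Hx : forall w, sp_rhs M D (SEF (FRel r args)) nu w -> X w) by (intros; apply H1; apply Hse; auto).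
    simpl in Hx, H0. unfold spT in Hx.
    assert (E: (fun i => eval M nu (args i)) = (fun i => eval M' nu (args i))).
    { apply functional_extensionality_dep; intros i. apply TC; auto. intros; apply Hx; eauto. }
    simpl. rewrite E, (proj1 (proj2 Hmu)). tauto.
  - assert (G := GM_of HD Th M X r args nu Hfm H0 H1).
    assert (Hx : forall w, sp_rhs M D (SEF (FIRel r args)) nu w -> X w) by (intros; apply H1; apply Hse; auto).
    simpl in Hx, H0. unfold spT in Hx.
    assert (E': (fun i => eval M nu (args i)) = (fun i => eval M' nu (args i))).
    { apply functional_extensionality_dep; intros i. apply TC; auto. intros; apply Hx; eauto. }
    simpl. rewrite <- E'. split.
    + apply (irel_sub HD Th M M' X Hfm Hfm' Hmu Hst); auto.
    + apply (irel_sub HD Th M' M X Hfm' Hfm (mutation_sym _ _ Hmu) (stable_sym _ _ _ Hst)); auto.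
      intros nu' Hn w Hs. apply (G nu' Hn). apply SE; auto. apply (HD r). apply G; auto.
  - assert (Hx : forall w, sp_rhs M D (SEF (FMem a b)) nu w -> X w) by (intros; apply H2; apply Hse; auto).
    simpl in Hx, H1. unfold spT in Hx. destruct H1. simpl.
    rewrite (TC _ _ H1 nu), (TC _ _ H3 nu) by (intros; apply Hx; tauto). tauto.
  - assert (Hx : forall w, sp_rhs M D (SEF (FAnd a b)) nu w -> X w) by (intros; apply H2; apply Hse; auto).
    simpl in Hx, H1. unfold spF in Hx. destruct H1. simpl.
    rewrite (H H1 nu), (H0 H3 nu) by (intros; apply Hx; tauto). tauto.
  - assert (Hx : forall w, sp_rhs M D (SEF (FNot a)) nu w -> X w) by (intros; apply H1; apply Hse; auto).
    simpl in Hx, H0. unfold spF in Hx. simpl.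
    rewrite (H H0 nu) by (intros; apply Hx; tauto). tauto.
  - assert (Hx : forall w, sp_rhs M D (SEF (FIte g a b)) nu w -> X w) by (intros; apply H3; apply Hse; auto).
    simpl in Hx, H2. unfold spF in Hx. destruct H2 as [Hg [Ha Hb]]. simpl.
    assert (E : sat M nu g <-> sat M' nu g) by (apply H; auto; apply gterm_wft_all; auto).
    destruct (classic (sat M nu g)).
    + rewrite (H0 Ha nu) by (intros; apply Hx; tauto). tauto.
    + rewrite (H1 Hb nu) by (intros; apply Hx; tauto). tauto.
  - assert (Hx : forall w, sp_rhs M D (SEF (FEx y g a)) nu w -> X w) by (intros; apply H2; apply Hse; auto).
    simpl in Hx, H1. unfold spF in Hx. destruct H1 as [Hg Ha]. simpl.
    assert (Hg' : wff g) by (apply gterm_wft_all; auto).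
    split; intros [u Hu]; exists u.
    + assert (E : sat M (upd nu y u) g <-> sat M' (upd nu y u) g) by (apply H; auto; intros; apply Hx; eauto).
      rewrite <- E. rewrite <- (H0 Ha) by (intros; apply Hx; right; exists u; tauto). tauto.
    + assert (E : sat M (upd nu y u) g <-> sat M' (upd nu y u) g) by (apply H; auto; intros; apply Hx; eauto).
      rewrite E. rewrite (H0 Ha) by (intros; apply Hx; right; exists u; tauto). tauto.
Qed.
End Proof.

Theorem theorem1 (S : signature) (D : @idefs S)
  (Th : forall (UF : Type) (UB : bsort S -> Type), @premodel S UF UB -> Prop)
  (UF : Type) (UB : bsort S -> Type) (M M' : @model S UF UB)
  (X : UF -> Prop) (nu : @assignment S UF UB) :
  idefs_wf D ->
  frame_model D Th M -> frame_model D Th M' ->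
  mutation M M' -> stable_on M M' X ->
  (forall alpha : @formula S, wff alpha ->
     (forall u, spI _ _ M (SEF alpha) nu u -> X u) ->
     (sat M nu alpha <-> sat M' nu alpha)) /\
  (forall (s : @srt S) (t : @term S s), wft t ->
     (forall u, spI _ _ M (SET s t) nu u -> X u) ->
     eval M nu t = eval M' nu t).
Proof.
  intros HD Hfm Hfm' Hmu Hst. split.
  - intros alpha Hw Hx. apply (proj2 (main_claim D HD Th M M' X Hfm Hfm' Hmu Hst)); auto.
  - intros s t Hw Hx. apply (proj1 (term_claim D HD Th M M' X Hfm Hfm' Hmu Hst)); auto.
Qed.
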